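(* Let $\mathbf{M}\in\mathbb{R}^{n\times n}$ be a symmetric positive definite matrix, let $\boldsymbol{\varphi}\in\mathbb{R}^n$, and let $\mathbf{H}=(H_1,\dots,H_m)^\intercal:\mathbb{R}^n\to\mathbb{R}^m$ be differentiable at $\boldsymbol{\varphi}$, with Jacobian $\nabla\mathbf{H}(\boldsymbol{\varphi})\in\mathbb{R}^{m\times n}$ whose $i$-th row is $\nabla H_i(\boldsymbol{\varphi})$. Fix an index $k\in\{1,\dots,m\}$ and let $\mathbf{H}^{-k}:\mathbb{R}^n\to\mathbb{R}^{m-1}$ denote $\mathbf{H}$ with its $k$-th component removed. Suppose $(\Delta\boldsymbol{\varphi},\Delta\boldsymbol{\gamma})\in\mathbb{R}^n\times\mathbb{R}^m$ solves $$\mathbf{M}\Delta\boldsymbol{\varphi}=\nabla\mathbf{H}(\boldsymbol{\varphi})^\intercal\Delta\boldsymbol{\gamma},\qquad \mathbf{H}(\boldsymbol{\varphi})+\nabla\mathbf{H}(\boldsymbol{\varphi})\Delta\boldsymbol{\varphi}=0,$$ and $(\Delta\tilde{\boldsymbol{\varphi}},\Delta\tilde{\boldsymbol{\gamma}})\in\mathbb{R}^n\times\mathbb{R}^{m-1}$ solves $$\mathbf{M}\Delta\tilde{\boldsymbol{\varphi}}=\nabla\mathbf{H}^{-k}(\boldsymbol{\varphi})^\intercal\Delta\tilde{\boldsymbol{\gamma}},\qquad \mathbf{H}^{-k}(\boldsymbol{\varphi})+\nabla\mathbf{H}^{-k}(\boldsymbol{\varphi})\Delta\tilde{\boldsymbol{\varphi}}=0.$$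 Then, with $\Delta\gamma_k$ the $k$-th component of $\Delta\boldsymbol{\gamma}$, $$\Delta\gamma_k\cdot\bigl(H_k(\boldsymbol{\varphi})+\nabla H_k(\boldsymbol{\varphi})\Delta\tilde{\boldsymbol{\varphi}}\bigr)\le 0.$$
   Context: The second system is obtained from the first by removing the $k$-th linearized constraint $H_k(\boldsymbol{\varphi})+\nabla H_k(\boldsymbol{\varphi})\Delta\boldsymbol{\varphi}=0$ (and its multiplier); $\Delta\boldsymbol{\gamma}$ are the Lagrange multipliers of the constraints in the first system. In the paper $\mathbf{M}$ is a mass matrix, hence symmetric positive definite. *)

(* Defs.v *)
From HB Require Import structures.
From mathcomp Require Import all_boot all_order all_algebra.
From mathcomp Require Import all_classical all_reals all_analysis.
Set Implicit Arguments. Unset Strict Implicit. Unset Printing Implicit Defensive.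
Import Order.TTheory GRing.Theory Num.Theory.
Import numFieldNormedType.Exports.
Local Open Scope ring_scope.

Definition spd (R : realType) n (M : 'M[R]_n) : Prop :=
  M^T = M /\ forall x : 'cV[R]_n, x != 0 -> 0 < (x^T *m M *m x) 0 0.

(* MathComp-Analysis' 'J f p is the n x m matrix of the differential acting on
   row vectors, i.e. the transpose of the usual Jacobian. *)
Definition jac (R : realType) n m (H : 'rV[R]_n -> 'rV[R]_m) (phi : 'rV[R]_n)
  : 'M[R]_(m, n) := (jacobian H phi)^T.

Definition Hdel (R : realType) n m (k : 'I_m) (H : 'rV[R]_n -> 'rV[R]_m)
  : 'rV[R]_n -> 'rV[R]_(m.-1) := fun x => col' k (H x).

(* Main.v *)
Require Import Defs.
From HB Require Import structures.
From mathcomp Require Import all_boot all_order all_algebra.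
From mathcomp Require Import all_classical all_reals all_analysis.
From mathcomp Require Import lra.
Import Order.TTheory GRing.Theory Num.Theory.
Import numFieldNormedType.Exports.
Local Open Scope ring_scope.

Lemma col'_norm (R : realType) p (k : 'I_p) (x : 'rV[R]_p) : `|col' k x| <= `|x|.
Proof.
have E q (y : 'rV[R]_q) : `|y| = mx_norm y by [].
rewrite !E !mx_normrE.
apply: bigmax_le => //=; first by apply: bigmax_ge_id.
move=> [i j] _ /=; apply/bigmax_geP; right; exists (i, lift k j) => //.
by rewrite mxE.
Qed.

Lemma col'_cont (R : realType) p (k : 'I_p) : continuous (@col' R 1 p k).
Proof.
apply: (@bounded_linear_continuous _ _ _ (@col' R 1 p k)).
apply/linear_boundedP; near=> r => x.
have h := col'_norm _ _ k x.
apply: (le_trans h); rewrite ler_peMl //.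
Unshelve. all: by end_near. Qed.



Lemma jac_del (R : realType) n m (k : 'I_m) (H : 'rV[R]_n -> 'rV[R]_m) phi :
  differentiable H phi -> jac (Hdel k H) phi = row' k (jac H phi).
Proof.
move=> dH; rewrite /jac /Hdel -tr_col'; congr (_^T).
have -> : (fun x => col' k (H x)) = (col' k) \o H by [].
rewrite /jacobian.
have dc : 'd (col' k) (H phi) = col' k :> (_ -> _).
  by apply: diff_lin; apply: col'_cont.
apply/matrixP => i j; rewrite !mxE.
rewrite diff_comp //; last by apply: linear_differentiable; apply: col'_cont.
by rewrite /= dc mxE.
Qed.

Theorem mainTheorem1 (R : realType) (n m : nat) (M : 'M[R]_n)
  (H : 'rV[R]_n -> 'rV[R]_m) (phi : 'rV[R]_n) (k : 'I_m)
  (dphi : 'cV[R]_n) (dgam : 'cV[R]_m)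
  (dphit : 'cV[R]_n) (dgamt : 'cV[R]_(m.-1)) :
  spd M ->
  differentiable H phi ->
  M *m dphi = (jac H phi)^T *m dgam ->
  (H phi)^T + jac H phi *m dphi = 0 ->
  M *m dphit = (jac (Hdel k H) phi)^T *m dgamt ->
  (Hdel k H phi)^T + jac (Hdel k H) phi *m dphit = 0 ->
  dgam k 0 * ((H phi) 0 k + (jac H phi *m dphit) k 0) <= 0.
Proof.
move=> [Msym Mpos] dH e1 e2.
rewrite jac_del // /Hdel tr_col'.
set J := jac H phi; set h := (H phi)^T.
move=> e3 e4.
pose r : 'cV[R]_m := h + J *m dphit.
pose d : 'cV[R]_n := dphit - dphi.
have -> : (H phi) 0 k = h k 0 by rewrite mxE.
have Er : h k 0 + (J *m dphit) k 0 = r k 0.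
  by rewrite /r [RHS]mxE.
rewrite Er.
have rk : row' k r = 0.
  rewrite -e4 /r; apply/matrixP => i j; rewrite !mxE.
  by congr (_ + _); apply: eq_bigr => l _; rewrite !mxE.
have Jd : J *m d = r - (h + J *m dphi) by rewrite /d mulmxBr /r; apply/matrixP=> i j; rewrite !mxE; lra.
rewrite e2 subr0 in Jd.
have s1 : (dgam^T *m r) 0 0 = dgam k 0 * r k 0.
  rewrite !mxE (bigD1 k) //= big1 ?addr0 ?mxE //.
  move=> i ik; case: (unliftP k i) ik => [j ->|->]; last by rewrite eqxx.
  move=> _; have := congr1 (fun A : 'cV[R]_(m.-1) => A j 0) rk; rewrite !mxE => ->; by rewrite mulr0.
have gJ : dgam^T *m J = dphi^T *m M.
  by rewrite -[J]trmxK -trmx_mul -e1 trmx_mul Msym.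
have s2 : dgam^T *m r = dphi^T *m M *m d.
  have hh : h = - (J *m dphi) by apply/eqP; rewrite -addr_eq0 e2.
  rewrite /r mulmxDr mulmxA gJ /d mulmxBr hh mulmxN mulmxA gJ -mulmxA; by rewrite addrC.
have s3 : dphit^T *m M *m d = 0.
  have : dphit^T *m M = (M *m dphit)^T by rewrite trmx_mul Msym.
  move=> ->; rewrite e3 trmx_mul trmxK -mulmxA mul_rowsub_mx.
  by rewrite Jd (_ : rowsub (lift k) r = row' k r) // rk mulmx0.
have s4 : dgam^T *m r = - (d^T *m M *m d).
  have -> : d^T *m M *m d = dphit^T *m M *m d - dphi^T *m M *m d.
    have tD : d^T = dphit^T - dphi^T by rewrite /d linearB.
    by rewrite tD !mulmxBl.
  by rewrite s2 s3 sub0r opprK.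
rewrite -s1 s4 mxE oppr_le0.
have [->|dn0] := eqVneq d 0; first by rewrite !(mulmx0, mul0mx, trmx0) mxE.
exact: ltW (Mpos d dn0).
Qed.
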